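(* Let $(X,\|\cdot\|_X)$ be a normed linear space and $(Y,d_Y)$ a metric space. If there exists a map $f\colon X\to Y$ such that $\lim_{t\to\infty}\rho_f(t)=\infty$, then $\mathrm{dens}(X)\leq\mathrm{dens}(Y)$.
   Context: $\rho_f(t)=\inf\{d_Y(f(x_1),f(x_2)): \|x_1-x_2\|_X\geq t\}$ is the modulus of compression of $f$. $\mathrm{dens}(Z)$ denotes the density character of a metric space $Z$, the smallest cardinality of a dense subset. *)

(* Defs.v *)
From HB Require Import structures.
From mathcomp Require Import all_boot all_order all_algebra.
From mathcomp Require Import all_classical all_reals all_analysis.
Set Implicit Arguments. Unset Strict Implicit. Unset Printing Implicit Defensive.
Import Order.TTheory GRing.Theory Num.Theory.
Import numFieldNormedType.Exports.
Local Open Scope classical_set_scope.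
Local Open Scope ring_scope.

Definition is_metric (R : realType) (Y : Type) (d : Y -> Y -> R) : Prop :=
  [/\ (forall x y, 0 <= d x y),
      (forall x y, d x y = 0 <-> x = y),
      (forall x y, d x y = d y x) &
      (forall x y z, d x z <= d x y + d y z)].

Definition metric_dense (R : realType) (T : Type) (d : T -> T -> R) (D : set T)
  : Prop :=
  forall (y : T) (e : R), 0 < e -> exists2 z, D z & d y z < e.

Definition norm_dist (R : realType) (X : normedModType R) (x y : X) : R :=
  `|x - y|.

(* dens(X) <= dens(Y): the least cardinality of a dense subset of X is at most
   the least cardinality of a dense subset of Y, i.e. every dense subset D of Y
   dominates (in cardinality) some dense subset E of X. *)
Definition dens_le (R : realType) (X : Type) (dX : X -> X -> R)
  (Y : Type) (dY : Y -> Y -> R) : Prop :=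
  forall D : set Y, metric_dense dY D ->
    exists E : set X, metric_dense dX E /\ (E #<= D)%card.

(* modulus of compression
   rho_f(t) = inf { d_Y(f x1, f x2) : ||x1 - x2|| >= t }, in the extended reals
   (inf of the empty set is +oo). *)
Definition compression_modulus (R : realType) (X : normedModType R)
  (Y : Type) (dY : Y -> Y -> R) (f : X -> Y) (t : R) : \bar R :=
  ereal_inf [set z : \bar R | exists x1 x2 : X,
      t <= `|x1 - x2| /\ z = (dY (f x1) (f x2))%:E].

(* Main.v *)
Require Import Defs.
From HB Require Import structures.
From mathcomp Require Import all_boot all_order all_algebra.
From mathcomp Require Import all_classical all_reals all_analysis.
From mathcomp Require Import ring lra.
Import Order.TTheory GRing.Theory Num.Theory.
Import numFieldNormedType.Exports.
Local Open Scope classical_set_scope.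
Local Open Scope ring_scope.

Lemma zalg (V : zmodType) (a b c d : V) : (a + b) - (c + d) + (c - a) = b - d.
Proof. by rewrite opprD addrC !addrA subrK [c + b]addrC addrK. Qed.

Theorem lemma2p1 (R : realType) (X : normedModType R) (Y : Type)
  (dY : Y -> Y -> R) (hY : is_metric dY) :
  (exists f : X -> Y,
      compression_modulus dY f t @[t --> +oo] --> +oo%E) ->
  dens_le (@norm_dist R X) dY.
Proof.
move=> [f hf] D hD.
case: hY => d0 dE dC dT.
have [T T0 hT] : exists2 T : R, 0 < T &
    forall p q : X, dY (f p) (f q) < 2 -> `|p - q| < T.
  have := (cvgeyPgt _).1 hf 2.
  case=> M [Mr hM].
  exists (`|M| + 1); first by rewrite ltr_pwDr ?ltr01.
  move=> p q hpq; rewrite ltNge; apply/negP => hle.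
  have := hM (`|M| + 1) (le_lt_trans (real_ler_norm Mr) (ltr_pwDr ltr01 (lexx _))).
  move=> h.
  have : (2%:E < (dY (f p) (f q))%:E)%E.
    by apply: (lt_le_trans h); apply: ereal_inf_lbound; exists p, q.
  by rewrite lte_fin ltNge (ltW hpq).
have [y0 Dy0] : exists y, D y by have [z ? _] := hD (f 0) 1 ltr01; exists z.
have [triv|[w w0]] : (forall x : X, x = 0) \/ exists w : X, w != 0.
  case: (pselect (exists w : X, w != 0)) => [h|h]; first by right.
  by left => x; apply/eqP/negPn/negP => hx; apply: h; exists x.
  exists setT; split.
    move=> x e e0; exists 0 => //.
    by rewrite /norm_dist (triv x) subr0 normr0.
  have : $|{injfun [set: X] >-> D}|.
    apply/injfunPex; exists (fun _ => y0) => [x _ //|x y _ _ _].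
    by rewrite (triv x) (triv y).
  by case=> h; exact: inj_card_le h.
set v := `|w|^-1 *: w.
have v1 : `|v| = 1 by exact: normfZV.
pose c (n : nat) : R := n.+1%:R * T.
pose a (n : nat) : R := 3 * n.+1%:R ^+ 3 * T.
pose phi n (x : X) : X := c n *: x + a n *: v.
have hc n : 0 < c n by rewrite /c mulr_gt0 // ltr0Sn.
have phiB n x z : phi n x - phi n z = c n *: (x - z).
  by rewrite /phi opprD addrACA subrr addr0 scalerBr.
have sepl n m x x' : (n < m)%N -> `|x| < n.+1%:R -> `|x'| < m.+1%:R ->
    T <= `|phi m x' - phi n x|.
  move=> nm hx hx'.
  have e : (phi m x' - phi n x) + (c n *: x - c m *: x') = (a m - a n) *: v.
    by rewrite zalg scalerBl.
  have hK : n.+1%:R + 1 <= m.+1%:R :> R.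
    by rewrite (_ : n.+1%:R + 1 = n.+2%:R) ?ler_nat // [RHS]mulrSr.
  have k1 : 1 <= n.+1%:R :> R by rewrite ler1n.
  set k := n.+1%:R in hK k1 hx; set K := m.+1%:R in hK hx'.
  have hp : 1 <= 3 * K ^+ 3 - 3 * k ^+ 3 - k ^+ 2 - K ^+ 2.
    have q : 0 <= (K - k - 1) * (K ^+ 2 + K * k + k ^+ 2).
      by apply: mulr_ge0; nra.
    nra.
  have : `|(a m - a n) *: v| <= `|phi m x' - phi n x| + (c n * `|x| + c m * `|x'|).
    rewrite -e; apply: (le_trans (ler_normD _ _)); rewrite lerD2l.
    apply: (le_trans (ler_normB _ _)).
    by rewrite !normrZ !ger0_norm ?(ltW (hc _)) ?(ltW T0).
  rewrite normrZ v1 mulr1 ger0_norm; last first.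
    rewrite subr_ge0 /a; apply: ler_wpM2r; first exact: ltW.
    apply: ler_wpM2l => //; rewrite lerXn2r ?nnegrE ?ler0n ?ler_nat //. 
    by apply: ltnW.
  have h1 : c n * `|x| <= c n * k by rewrite ler_wpM2l ?(ltW (hc _)) ?ltW.
  have h2 : c m * `|x'| <= c m * K by rewrite ler_wpM2l ?(ltW (hc _)) ?ltW.
  move: h1 h2; rewrite /a /c -/k -/K => h1 h2 h.
  nra.
pose P n y : set X := fun z => `|z| < n.+1%:R /\ dY (f (phi n z)) y < 1.
pose sel n y := xget 0 (P n y).
pose Q x y := D y /\ exists n, (exists z, P n y z) /\ x = sel n y.
have close n m u u' y : P n y u -> P m y u' -> `|phi n u - phi m u'| < T.
  move=> [_ h1] [_ h2]; apply: hT; apply: le_lt_trans (dT _ y _) _.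
  by rewrite (dC y); lra.
exists [set x | exists y, Q x y]; split.
  move=> x e e0.
  pose n := Num.bound (`|x| + e^-1).
  have hn : `|x| + e^-1 < n.+1%:R.
    apply: (lt_le_trans (archi_boundP _)).
      by rewrite addr_ge0 // invr_ge0 ltW.
    by rewrite ler_nat.
  have ei : 0 < e^-1 by rewrite invr_gt0.
  have [y Dy hy] := hD (f (phi n x)) 1 ltr01.
  have Px : P n y x by split => //; lra.
  have Pz : P n y (sel n y) by apply: xgetPex; exists x.
  exists (sel n y); first by exists y; split=> //; exists n; split=> //; exists x.
  rewrite /norm_dist.
  have := close n n x (sel n y) y Px Pz.
  rewrite phiB normrZ ger0_norm ?(ltW (hc _)) // /c => h.
  have ek : 1 < e * n.+1%:R.
    have : e * e^-1 < e * n.+1%:R by rewrite ltr_pM2l //; have := normr_ge0 x; lra.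
    by rewrite mulfV ?gt_eqF.
  have hkT : 0 < n.+1%:R * T by exact: (hc n).
  have := normr_ge0 (x - sel n y).
  nra.
pose g x := match pselect (exists y, Q x y) with
  | left h => projT1 (cid h) | right _ => y0 end.
have gQ x : (exists y, Q x y) -> Q x (g x).
  move=> hx; rewrite /g; case: pselect => [h|//].
  exact: projT2 (cid h).
have : $|{injfun [set x | exists y, Q x y] >-> D}|.
  apply/injfunPex; exists g.
    by move=> x /gQ [].
  move=> x x' /set_mem Ex /set_mem Ex' gxx'.
  have [_ [n [[z Pz] ex]]] := gQ x Ex.
  have := gQ x' Ex'; rewrite -gxx' => -[_ [m [[z' Pz'] ex']]].
  have Px : P n (g x) (sel n (g x)) by apply: xgetPex; exists z.
  have Px' : P m (g x) (sel m (g x)) by apply: xgetPex; exists z'.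
  rewrite -ex in Px; rewrite -ex' in Px'.
  case: (ltngtP n m) => [nm|mn|nm]; last by rewrite ex ex' nm.
    have := sepl n m x x' nm Px.1 Px'.1.
    by rewrite leNgt (close m n x' x _ Px' Px).
  have := sepl m n x' x mn Px'.1 Px.1.
  by rewrite leNgt (close n m x x' _ Px Px').
by case=> h; exact: inj_card_le h.
Qed.
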